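(* Let $\varepsilon>0$ be a given security threshold (written $\mathsf{negl}(\lambda)$ in the paper) and let $\eta\in\mathbb{Z}^+$ satisfy $1/\eta<\varepsilon$. In the setting described in the context, if \[ \frac{2\,\lambda_{\max}(M_c'')}{\lambda_{\min}(M_o')}\;\le\;\eta, \] then both $M_f^{(0)}$ and $M_f^{(1)}$ are density matrices.
   Context: Let $d_1\ge d_2\ge 1$ be integers, $\mathcal H_M=(\mathbb C^2)^{\otimes d_1}$, $\mathcal H_{M_c}=(\mathbb C^2)^{\otimes d_2}$. For $n\ge 1$ and $k\in\{0,1\}^{2n}$ let $U_k=\bigotimes_{j=1}^{n}X^{k_{2j-1}}Z^{k_{2j}}$ with $X,Z$ the Pauli matrices. Let $M_o$ be a strictly positive definite density matrix on $\mathcal H_M$ and $M_c$ a density matrix on $\mathcal H_{M_c}$. For keys $k\in\{0,1\}^{2d_1}$, $k'\in\{0,1\}^{2d_2}$ put $M_o'=U_kM_oU_k^\dagger$, $M_c'=U_{k'}M_cU_{k'}^\dagger$, let $V|\psi\rangle=|\psi\rangle\otimes|0\rangle^{\otimes(d_1-d_2)}$ (isometry $\mathcal H_{M_c}\to\mathcal H_M$) and $M_c''=VM_c'V^\dagger$. On $\mathbb C^2\otimes\mathcal H_M$ (blocks w.r.t. the first qubit) \[ M_a^{(0)}=\begin{pmatrix}\tfrac12M_o'&0\\0&\tfrac12M_o'\end{pmatrix},\qquad M_a^{(1)}=\begin{pmatrix}\tfrac12M_o'&\tfrac1\eta M_c''\\ \tfrac1\eta (M_c'')^\dagger&\tfrac12M_o'\end{pmatrix},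 \] and $M_f^{(b)}=U_\sigma M_a^{(b)}U_\sigma^\dagger$ for a $2^{d_1+1}\times 2^{d_1+1}$ permutation matrix $U_\sigma$. $\lambda_{\min}(M_o')$ and $\lambda_{\max}(M_c'')$ denote the smallest eigenvalue of $M_o'$ and the largest eigenvalue of $M_c''$ (on their supports). *)

(* Defs.v *)
(* complex scalars are an arbitrary numClosedFieldType C
   (e.g. algC or complex numbers). *)
From HB Require Import structures.
From mathcomp Require Import all_boot all_order perm all_algebra.
From mathcomp Require Import mxtens.

Set Implicit Arguments.
Unset Strict Implicit.
Unset Printing Implicit Defensive.

Import Order.TTheory GRing.Theory Num.Theory.
Local Open Scope ring_scope.

Section Defs.
Variable C : numClosedFieldType.

Definition adj {m n} (A : 'M[C]_(m, n)) : 'M[C]_(n, m) := (map_mx Num.conj A)^T.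

Definition hermitian {n} (A : 'M[C]_n) : Prop := adj A = A.

Definition psd {n} (A : 'M[C]_n) : Prop :=
  forall x : 'cV[C]_n, 0 <= (adj x *m A *m x) 0 0.

Definition pd {n} (A : 'M[C]_n) : Prop :=
  forall x : 'cV[C]_n, x != 0 -> 0 < (adj x *m A *m x) 0 0.

Definition density {n} (A : 'M[C]_n) : Prop :=
  hermitian A /\ psd A /\ \tr A = 1.

Definition is_lambda_min {n} (A : 'M[C]_n) (l : C) : Prop :=
  eigenvalue A l /\ forall a, eigenvalue A a -> l <= a.
Definition is_lambda_max {n} (A : 'M[C]_n) (l : C) : Prop :=
  eigenvalue A l /\ forall a, eigenvalue A a -> a <= l.

Definition pauliX : 'M[C]_2 := \matrix_(i, j) (i != j)%:R.
Definition pauliZ : 'M[C]_2 :=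
  \matrix_(i, j) (if i == j then (if (i : nat) == 0%N then 1 else -1) else 0).

Fixpoint ktens (n : nat) : (nat -> 'M[C]_2) -> 'M[C]_(2 ^ n) :=
  match n with
  | 0 => fun _ => 1%:M
  | n'.+1 => fun A =>
      castmx (esym (expnS 2 n'), esym (expnS 2 n'))
             (A 0%N *t ktens n' (fun q => A q.+1))
  end.

(* U_k = (x)_{j=1}^n X^{k_{2j-1}} Z^{k_{2j}}, k in {0,1}^{2n}
   (0-based: qubit q uses bits k_(2q) for X and k_(2q+1) for Z) *)
Definition pauliU (n : nat) (k : (2 * n).-tuple bool) : 'M[C]_(2 ^ n) :=
  ktens n (fun q => pauliX ^+ nth false k (2 * q) *m pauliZ ^+ nth false k (2 * q).+1).

(* V |psi> = |psi> (x) |0>^{(d1-d2)} : isometry H_{M_c} -> H_M *)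
Definition isoV (d1 d2 : nat) : 'M[C]_(2 ^ d1, 2 ^ d2) :=
  \matrix_(i, j) ((i : nat) == j * 2 ^ (d1 - d2))%N%:R.

(* M_a^(0) and M_a^(1), blocks w.r.t. the first qubit *)
Definition Ma0 {N} (Mo' : 'M[C]_N) : 'M[C]_(N + N) :=
  block_mx (2^-1 *: Mo') 0 0 (2^-1 *: Mo').
Definition Ma1 {N} (Mo' Mc'' : 'M[C]_N) (eta : nat) : 'M[C]_(N + N) :=
  block_mx (2^-1 *: Mo') ((eta%:R)^-1 *: Mc'')
           ((eta%:R)^-1 *: adj Mc'') (2^-1 *: Mo').

End Defs.

(* Main.v *)
Require Import Defs.
From HB Require Import structures.
From mathcomp Require Import all_boot all_order perm all_algebra.
From mathcomp Require Import mxtens.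
From mathcomp Require Import ring.
Import Order.TTheory GRing.Theory Num.Theory.
Local Open Scope ring_scope.

Set Implicit Arguments.
Unset Strict Implicit.
Section Aux.
Variable C : numClosedFieldType.
Implicit Types (a : C).

Lemma adj_mul m n p (A : 'M[C]_(m, n)) (B : 'M[C]_(n, p)) :
  adj (A *m B) = adj B *m adj A.
Proof. by rewrite /adj map_mxM trmx_mul. Qed.

Lemma adjK m n (A : 'M[C]_(m, n)) : adj (adj A) = A.
Proof. by apply/matrixP => i j; rewrite !mxE conjCK. Qed.

Lemma adjZ m n a (A : 'M[C]_(m, n)) : adj (a *: A) = a^* *: adj A.
Proof. by apply/matrixP => i j; rewrite !mxE rmorphM. Qed.

Lemma adjD m n (A B : 'M[C]_(m, n)) : adj (A + B) = adj A + adj B.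
Proof. by apply/matrixP => i j; rewrite !mxE rmorphD. Qed.

Lemma adj0 m n : adj (0 : 'M[C]_(m, n)) = 0.
Proof. by apply/matrixP => i j; rewrite !mxE rmorph0. Qed.

Lemma adj1 n : adj (1%:M : 'M[C]_n) = 1%:M.
Proof. by apply/matrixP => i j; rewrite !mxE eq_sym rmorph_nat. Qed.

Lemma adj_block m1 m2 n1 n2 (A : 'M[C]_(m1, n1)) (B : 'M[C]_(m1, n2))
  (D : 'M[C]_(m2, n1)) (E : 'M[C]_(m2, n2)) :
  adj (block_mx A B D E) = block_mx (adj A) (adj D) (adj B) (adj E).
Proof. by rewrite /adj map_block_mx tr_block_mx. Qed.

Lemma adj_col m1 m2 n (A : 'M[C]_(m1, n)) (B : 'M[C]_(m2, n)) :
  adj (col_mx A B) = row_mx (adj A) (adj B).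
Proof. by rewrite /adj map_col_mx tr_col_mx. Qed.

Lemma adj_perm n (s : 'S_n) : adj (perm_mx s : 'M[C]_n) = perm_mx s^-1.
Proof. by rewrite /adj map_perm_mx tr_perm_mx. Qed.

Lemma conj_nat_inv (k : nat) : ((k%:R : C)^-1)^* = (k%:R)^-1.
Proof. by rewrite fmorphV rmorph_nat. Qed.

Definition qf n (A : 'M[C]_n) (x y : 'cV[C]_n) := (adj x *m A *m y) 0 0.
Arguments qf {n}.

Lemma qf_ge0 n (x : 'cV[C]_n) : 0 <= (adj x *m x) 0 0.
Proof.
rewrite !mxE; apply: sumr_ge0 => i _; rewrite !mxE mulrC; exact: mul_conjC_ge0.
Qed.

Lemma qf_gt0 n (x : 'cV[C]_n) : x != 0 -> 0 < (adj x *m x) 0 0.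
Proof.
move=> nz; rewrite lt0r qf_ge0 andbT.
have [i Hi] : exists i, x i 0 != 0.
  apply/existsP; move: nz; apply: contraR; rewrite negb_exists => /forallP H.
  apply/eqP/matrixP => i j; rewrite ord1 mxE; exact/eqP/negPn/H.
rewrite !mxE (bigD1 i) //= paddr_eq0.
- by rewrite !mxE mulrC mul_conjC_eq0 (negbTE Hi).
- by rewrite !mxE mulrC mul_conjC_ge0.
- by apply: sumr_ge0 => j _; rewrite !mxE mulrC mul_conjC_ge0.
Qed.


Lemma unitaryC n (U : 'M[C]_n) : U *m adj U = 1%:M -> adj U *m U = 1%:M.
Proof. exact: mulmx1C. Qed.

Lemma herm_conj m n (S : 'M[C]_(m, n)) (A : 'M[C]_n) :
  Defs.hermitian A -> Defs.hermitian (S *m A *m adj S).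
Proof. by rewrite /Defs.hermitian => hA; rewrite !adj_mul adjK hA mulmxA. Qed.

Lemma psd_conj m n (S : 'M[C]_(m, n)) (A : 'M[C]_n) :
  psd A -> psd (S *m A *m adj S).
Proof.
move=> hA x; have := hA (adj S *m x).
by rewrite adj_mul adjK !mulmxA.
Qed.

Lemma pd_conj n (U : 'M[C]_n) (A : 'M[C]_n) :
  U *m adj U = 1%:M -> pd A -> pd (U *m A *m adj U).
Proof.
move=> hU hA x nx; have := hA (adj U *m x).
rewrite adj_mul adjK !mulmxA; apply.
apply: contra nx => /eqP h; apply/eqP.
by rewrite -[x]mul1mx -hU -mulmxA h mulmx0.
Qed.

Lemma tr_conj n (U : 'M[C]_n) (A : 'M[C]_n) :
  U *m adj U = 1%:M -> \tr (U *m A *m adj U) = \tr A.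
Proof.
move=> /unitaryC hU; by rewrite mxtrace_mulC mulmxA hU mul1mx.
Qed.

Lemma spectral_form n (A : 'M[C]_n) : Defs.hermitian A ->
  exists P : 'M[C]_n, exists d : 'rV[C]_n,
    [/\ P *m adj P = 1%:M, adj P *m P = 1%:M, A = adj P *m diag_mx d *m P &
        forall j, eigenvalue A (d 0 j)].
Proof.
move=> hA.
have hA' : A \is hermsymmx.
  apply/is_hermitianmxP; rewrite expr0 scale1r.
  by rewrite -{1}hA /adj map_trmx.
have /hermitian_normalmx /orthomx_spectralP Ae := hA'.
set P := spectralmx A in Ae; set d := spectral_diag A in Ae.
have PU : P *m adj P = 1%:M.
  have /unitarymxP := spectral_unitarymx A.
  by rewrite /adj map_trmx.
have iP : invmx P = adj P.
  by rewrite invmx_unitary ?spectral_unitarymx // /adj map_trmx.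
rewrite iP in Ae.
exists P, d; split => //; first exact: unitaryC.
move=> j; apply/eigenvalueP; exists (row j P).
  rewrite {1}Ae -row_mul !mulmxA PU mul1mx row_mul row_diag_mx -scalemxAl.
  by rewrite -rowE.
apply: contraT => /negPn /eqP h.
have : row j (P *m adj P) = 0 by rewrite row_mul h mul0mx.
rewrite PU => /rowP /(_ j); rewrite !mxE eqxx /= => /eqP.
by rewrite oner_eq0.
Qed.


Lemma qf_spec n (A P : 'M[C]_n) (d : 'rV[C]_n) (x : 'cV[C]_n) :
  adj P *m P = 1%:M -> A = adj P *m diag_mx d *m P ->
  (adj x *m x) 0 0 = \sum_j ((P *m x) j 0)^* * (P *m x) j 0 /\
  qf A x x = \sum_j d 0 j * (((P *m x) j 0)^* * (P *m x) j 0).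
Proof.
move=> hP ->.
have E : adj x *m x = adj (P *m x) *m (P *m x).
  by rewrite adj_mul mulmxA -(mulmxA (adj x)) hP mulmx1.
split.
  rewrite E mxE.
  by apply: eq_bigr => j _; rewrite !mxE.
rewrite /qf.
have -> : adj x *m (adj P *m diag_mx d *m P) *m x = adj (P *m x) *m diag_mx d *m (P *m x).
  by rewrite adj_mul !mulmxA.
rewrite mxE.
apply: eq_bigr => j _; rewrite mul_mx_diag !mxE.
by rewrite mulrCA mulrA.
Qed.

Lemma rayleigh_min n (A : 'M[C]_n) l : Defs.hermitian A ->
  (forall a, eigenvalue A a -> l <= a) ->
  forall x, l * (adj x *m x) 0 0 <= qf A x x.
Proof.
move=> hA hl x; have [P [d [_ hP Ae hd]]] := spectral_form hA.
have [-> ->] := qf_spec x hP Ae.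
rewrite mulr_sumr; apply: ler_sum => j _.
apply: ler_wpM2r; last exact: hl.
by rewrite mulrC mul_conjC_ge0.
Qed.

Lemma rayleigh_max n (A : 'M[C]_n) l : Defs.hermitian A ->
  (forall a, eigenvalue A a -> a <= l) ->
  forall x, qf A x x <= l * (adj x *m x) 0 0.
Proof.
move=> hA hl x; have [P [d [_ hP Ae hd]]] := spectral_form hA.
have [-> ->] := qf_spec x hP Ae.
rewrite mulr_sumr; apply: ler_sum => j _.
apply: ler_wpM2r; last exact: hl.
by rewrite mulrC mul_conjC_ge0.
Qed.


Definition unitary n (U : 'M[C]_n) := U *m adj U = 1%:M.

Lemma unitary_cast m n (e : m = n) (M : 'M[C]_m) :
  unitary M -> unitary (castmx (e, e) M).
Proof. by case: n / e; rewrite castmx_id. Qed.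

Lemma adj_tens m n p q (A : 'M[C]_(m, n)) (B : 'M[C]_(p, q)) :
  adj (A *t B) = adj A *t adj B.
Proof. by rewrite /adj map_mxT trmx_tens. Qed.

Lemma tens11 m n : (1%:M : 'M[C]_m) *t (1%:M : 'M[C]_n) = 1%:M.
Proof.
apply/matrixP => i j.
case: (mxtens_indexP i) => i0 i1; case: (mxtens_indexP j) => j0 j1.
rewrite tensmxE !mxE (inj_eq (can_inj (@mxtens_indexK _ _))) xpair_eqE.
by case: (i0 == j0); case: (i1 == j1); rewrite /= ?mulr1 ?mulr0.
Qed.

Lemma unitary_tens m n (A : 'M[C]_m) (B : 'M[C]_n) :
  unitary A -> unitary B -> unitary (A *t B).
Proof. by rewrite /unitary adj_tens tensmx_mul => -> ->; exact: tens11. Qed.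

Lemma unitary_ktens n (A : nat -> 'M[C]_2) :
  (forall q, unitary (A q)) -> unitary (ktens n A).
Proof.
elim: n A => [|n IH] A hA /=; first by rewrite /unitary adj1 mul1mx.
by apply: unitary_cast; apply: unitary_tens => //; apply: IH.
Qed.

Lemma unitary_mul n (A B : 'M[C]_n) : unitary A -> unitary B -> unitary (A *m B).
Proof.
rewrite /unitary adj_mul => hA hB.
by rewrite mulmxA -(mulmxA A) hB mulmx1 hA.
Qed.

Lemma unitaryX : unitary (pauliX C).
Proof.
apply/matrixP => i j; rewrite !mxE !big_ord_recl big_ord0 !mxE.
by case: i => [[|[|//]]] ?; case: j => [[|[|//]]] ? /=; rewrite ?rmorph0 ?rmorph1 /=;
  rewrite ?mulr0 ?mul0r ?mulr1 ?addr0 ?add0r.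
Qed.

Lemma unitaryZ : unitary (pauliZ C).
Proof.
apply/matrixP => i j; rewrite !mxE !big_ord_recl big_ord0 !mxE.
by case: i => [[|[|//]]] ?; case: j => [[|[|//]]] ? /=; rewrite ?rmorph0 ?rmorph1 ?rmorphN1 /=;
  rewrite ?mulr0 ?mul0r ?mulr1 ?addr0 ?add0r ?mulrNN ?mulr1.
Qed.

Lemma unitary_exp (A : 'M[C]_2) (b : bool) : unitary A -> unitary (A ^+ b).
Proof.
case: b => hA /=; first by rewrite expr1.
by rewrite expr0 /unitary adj1 mul1mx.
Qed.

Lemma unitary_pauliU n (k : (2 * n).-tuple bool) : unitary (pauliU C k).
Proof.
apply: unitary_ktens => q; apply: unitary_mul; apply: unitary_exp.
  exact: unitaryX.
exact: unitaryZ.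
Qed.


Lemma unitary_perm n (s : 'S_n) : unitary (perm_mx s : 'M[C]_n).
Proof. by rewrite /unitary adj_perm -perm_mxM mulgV perm_mx1. Qed.

Lemma pos_eig n (A : 'M[C]_n) l : pd A -> eigenvalue A l -> 0 < l.
Proof.
move=> hA /eigenvalueP [v hv nv].
have nx : adj v != 0.
  by apply: contra nv => /eqP h; apply/eqP; rewrite -[v]adjK h adj0.
have := hA _ nx; rewrite adjK hv -scalemxAl mxE.
rewrite pmulr_lgt0 //.
by have := qf_gt0 nx; rewrite adjK.
Qed.

Lemma addmx_ij m n (X Y : 'M[C]_(m, n)) i j : (X + Y) i j = X i j + Y i j.
Proof. by rewrite mxE. Qed.

Lemma scalemx_ij m n a (X : 'M[C]_(m, n)) i j : (a *: X) i j = a * X i j.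
Proof. by rewrite mxE. Qed.

Lemma block_form N (A B D E : 'M[C]_N) (x : 'cV[C]_(N + N)) :
  let a := usubmx x in let b := dsubmx x in
  (adj x *m block_mx A B D E *m x) 0 0 =
  qf A a a + qf B a b + qf D b a + qf E b b.
Proof.
move=> a b; rewrite -[x](vsubmxK x) adj_col mul_row_block mul_row_col.
rewrite !mulmxDl !addmx_ij /qf -/a -/b.
ring.

Qed.

Lemma Ma0_density N (A : 'M[C]_N) :
  Defs.hermitian A -> psd A -> \tr A = 1 -> density (Ma0 A).
Proof.
move=> hA pA tA; split; [|split].
- by rewrite /Defs.hermitian /Ma0 adj_block !adj0 !adjZ hA conj_nat_inv.
- move=> x; rewrite /Ma0 block_form /qf !mulmx0 !mul0mx.
  rewrite (_ : (0 : 'M[C]_(1,1)) 0 0 = 0); last by rewrite mxE.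
  rewrite !addr0 -!scalemxAr -!scalemxAl !scalemx_ij -mulrDr.
  by apply: mulr_ge0; [rewrite invr_ge0 ler0n | apply: addr_ge0; apply: pA].
- rewrite /Ma0 mxtrace_block !mxtraceZ tA mulr1.
  have h2 : (2 : C) != 0 by rewrite pnatr_eq0.
  by field.
Qed.


Lemma qf_add n (B : 'M[C]_n) (u v : 'cV[C]_n) :
  qf B (u + v) (u + v) = qf B u u + qf B u v + qf B v u + qf B v v.
Proof.
rewrite /qf adjD !mulmxDl !mulmxDr !addmx_ij; ring.
Qed.

Lemma Ma1_density N (A B : 'M[C]_N) (eta : nat) lmin lmax :
  Defs.hermitian A -> Defs.hermitian B -> psd A -> psd B -> \tr A = 1 ->
  (forall x, lmin * (adj x *m x) 0 0 <= qf A x x) ->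
  (forall x, qf B x x <= lmax * (adj x *m x) 0 0) ->
  (0 < eta)%N -> 0 < lmin -> 2 * lmax / lmin <= eta%:R ->
  density (Ma1 A B eta).
Proof.
move=> hA hB pA pB tA rA rB eta0 lmin0 hle; split; [|split].
- by rewrite /Defs.hermitian /Ma1 adj_block !adjZ adjK hA !conj_nat_inv.
- move=> x; rewrite /Ma1 block_form hB.
  set a := usubmx x; set b := dsubmx x.
  rewrite /qf -!scalemxAr -!scalemxAl !scalemx_ij -!/(qf _ _ _).
  set e := (eta%:R : C)^-1.
  have e0 : 0 <= e by rewrite invr_ge0 ler0n.
  have h20 : 0 <= (2 : C)^-1 by rewrite invr_ge0 ler0n.
  set na := (adj a *m a) 0 0; set nb := (adj b *m b) 0 0.
  have na0 : 0 <= na by apply: qf_ge0.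
  have nb0 : 0 <= nb by apply: qf_ge0.
  have h1 : 2^-1 * (lmin * (na + nb)) <= 2^-1 * (qf A a a + qf A b b).
    by apply: ler_wpM2l => //; rewrite mulrDr; apply: lerD; apply: rA.
  have h2 : e * (qf B a a + qf B b b) <= e * (lmax * (na + nb)).
    by apply: ler_wpM2l => //; rewrite mulrDr; apply: lerD; apply: rB.
  have h3 : 0 <= e * qf B (a + b) (a + b) by apply: mulr_ge0 => //; apply: pB.
  have h4 : e * lmax <= 2^-1 * lmin.
    have etan0 : (eta%:R : C) != 0 by rewrite pnatr_eq0 -lt0n.
    move: hle; rewrite ler_pdivrMr // => hle.
    have : (2 * lmax) * (e * 2^-1) <= (eta%:R * lmin) * (e * 2^-1).
      by apply: ler_wpM2r => //; apply: mulr_ge0.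
    have h2n0 : (2 : C) != 0 by rewrite pnatr_eq0.
    have -> : 2 * lmax * (e * 2^-1) = e * lmax by rewrite /e; field.
    have -> : eta%:R * lmin * (e * 2^-1) = 2^-1 * lmin by rewrite /e; field.
    by [].
  have H := lerB (lerD h1 h3) h2.
  apply: le_trans (le_trans _ H) _.
    have -> : 2^-1 * (lmin * (na + nb)) + 0 - e * (lmax * (na + nb)) =
              (na + nb) * (2^-1 * lmin - e * lmax) by ring.
    by apply: mulr_ge0; [apply: addr_ge0 | rewrite subr_ge0].
  rewrite qf_add le_eqVlt; apply/orP; left; apply/eqP; ring.
- rewrite /Ma1 mxtrace_block !mxtraceZ tA mulr1.
  have h2 : (2 : C) != 0 by rewrite pnatr_eq0.
  by field.
Qed.


Lemma density_conj n (U A : 'M[C]_n) : unitary U -> density A ->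
  density (U *m A *m adj U).
Proof.
move=> hU [hA [pA tA]]; split; [exact: herm_conj|split; first exact: psd_conj].
by rewrite tr_conj.
Qed.

End Aux.

Unset Implicit Arguments.

Theorem corollary5 (C : numClosedFieldType) (d1 d2 : nat)
  (hd : (1 <= d2 <= d1)%N)
  (Mo : 'M[C]_(2 ^ d1)) (Mc : 'M[C]_(2 ^ d2))
  (hMo : density Mo) (hMo_pd : pd Mo) (hMc : density Mc)
  (k : (2 * d1).-tuple bool) (k' : (2 * d2).-tuple bool)
  (sigma : 'S_(2 ^ d1 + 2 ^ d1))
  (eps : C) (eta : nat) (heps : 0 < eps) (heta : (0 < eta)%N)
  (heta_eps : (eta%:R)^-1 < eps)
  (lmin lmax : C) :
  let Mo' := pauliU C k *m Mo *m adj (pauliU C k) in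
  let Mc' := pauliU C k' *m Mc *m adj (pauliU C k') in
  let Mc'' := isoV C d1 d2 *m Mc' *m adj (isoV C d1 d2) in
  let Us := perm_mx sigma : 'M[C]_(2 ^ d1 + 2 ^ d1) in
  is_lambda_min Mo' lmin -> is_lambda_max Mc'' lmax ->
  2 * lmax / lmin <= eta%:R ->
  density (Us *m Ma0 Mo' *m adj Us) /\
  density (Us *m Ma1 Mo' Mc'' eta *m adj Us).
Proof.
move=> Mo' Mc' Mc'' Us [lminE lminP] [lmaxE lmaxP] hle.
have [hMoh [hMop hMot]] := hMo.
have [hMch [hMcp hMct]] := hMc.
have hU : unitary (pauliU C k) by apply: unitary_pauliU.
have hOh : Defs.hermitian Mo' by apply: herm_conj.
have hOp : psd Mo' by apply: psd_conj.
have hOpd : pd Mo' by apply: pd_conj.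
have hOt : \tr Mo' = 1 by rewrite tr_conj.
have hCh : Defs.hermitian Mc'' by apply: herm_conj; apply: herm_conj.
have hCp : psd Mc'' by apply: psd_conj; apply: psd_conj.
have lmin0 : 0 < lmin by apply: pos_eig lminE.
have rA := rayleigh_min hOh lminP.
have rB := rayleigh_max hCh lmaxP.
have hUs : unitary Us by apply: unitary_perm.
split; apply: density_conj => //.
  exact: Ma0_density.
exact: (Ma1_density hOh hCh hOp hCp hOt rA rB heta lmin0 hle).
Qed.
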